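(* For every limit-periodic potential $d\in\ell^\infty(\mathbb{Z})$, the topological group $\mathrm{hull}(d)$ is a procyclic group, i.e. it is isomorphic (as a topological group) to the inverse limit of an inverse system of finite cyclic groups.
   Context: $\sigma$ is the left shift on $\ell^\infty(\mathbb{Z})$ (sup norm), $(\sigma d)_n=d_{n+1}$, and $\mathrm{hull}(d)$ is the closure of $\{\sigma^k d:k\in\mathbb{Z}\}$. A potential is periodic if its shift orbit is finite, and limit-periodic if it lies in the $\ell^\infty$-closure of the periodic potentials. For limit-periodic $d$, $\mathrm{hull}(d)$ is compact and carries a unique topological group structure with identity $d$ such that $k\mapsto\sigma^k(d)$ is a homomorphism $\mathbb{Z}\to\mathrm{hull}(d)$. An inverse limit of an inverse system $(X_i,\phi_{ij})$ of topological groups (continuous homomorphisms $\phi_{ij}:X_j\to X_i$ for $i\le j$ in a directed set, with $\phi_{ii}=\mathrm{id}$, $\phi_{ij}\phi_{jk}=\phi_{ik}$) is a topological group $X$ with compatible continuous homomorphisms $\phi_i:X\to X_i$ ($\phi_{ij}\phi_j=\phi_i$) universal among such families; finite cyclic groups carry the discrete topology. *)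

(* Defs.v *)
From mathcomp Require Import all_boot all_order all_algebra.
From mathcomp Require Import reals.
Set Implicit Arguments. Unset Strict Implicit. Unset Printing Implicit Defensive.
Import Order.TTheory GRing.Theory Num.Theory.
Local Open Scope ring_scope.

Section Defs.
Variable R : realType.

Definition seqZ := int -> R.

Definition bounded_seq (d : seqZ) : Prop := exists M : R, forall n, `|d n| <= M.

Definition close (e : R) (x y : seqZ) : Prop := forall n, `|x n - y n| <= e.

Definition shift (k : int) (d : seqZ) : seqZ := fun n => d (n + k).

Definition periodic (d : seqZ) : Prop :=
  exists (N : nat) (f : 'I_N -> seqZ), forall k : int, exists i, shift k d = f i.

Definition limit_periodic (d : seqZ) : Prop :=
  forall e : R, 0 < e -> exists p, periodic p /\ close e d p.

Definition in_hull (d x : seqZ) : Prop :=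
  forall e : R, 0 < e -> exists k : int, close e x (shift k d).

(* (mul, inv) is a topological group structure on hull(d) (with the
   l^oo-subspace topology), with identity d, such that k |-> sigma^k d is a
   group homomorphism Z -> hull(d). *)
Definition hull_topgroup (d : seqZ) (mul : seqZ -> seqZ -> seqZ)
  (inv : seqZ -> seqZ) : Prop :=
  (forall x y, in_hull d x -> in_hull d y -> in_hull d (mul x y)) /\
      (forall x, in_hull d x -> in_hull d (inv x)) /\
      (forall x y z, in_hull d x -> in_hull d y -> in_hull d z ->
         mul x (mul y z) = mul (mul x y) z) /\
      (forall x, in_hull d x -> mul d x = x /\ mul x d = x) /\
      (forall x, in_hull d x -> mul (inv x) x = d /\ mul x (inv x) = d) /\
      (forall k l : int, mul (shift k d) (shift l d) = shift (k + l) d) /\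
      (forall x y, in_hull d x -> in_hull d y -> forall e : R, 0 < e ->
         exists2 dl : R, 0 < dl & forall x' y', in_hull d x' -> in_hull d y' ->
           close dl x x' -> close dl y y' -> close e (mul x y) (mul x' y')) /\
    (forall x, in_hull d x -> forall e : R, 0 < e ->
         exists2 dl : R, 0 < dl & forall x', in_hull d x' ->
           close dl x x' -> close e (inv x) (inv x')).

End Defs.

(* An inverse system of finite cyclic groups Z/(m i + 1) (discrete topology)
   over a directed (preordered, nonempty) index set (I, le); the transition
   maps phi i j : Z/(m j + 1) -> Z/(m i + 1) are used for le i j. *)
Definition cyclic_inverse_system (I : Type) (le : I -> I -> Prop) (m : I -> nat)
  (phi : forall i j : I, 'I_(m j).+1 -> 'I_(m i).+1) : Prop :=
  inhabited I /\
      (forall i, le i i) /\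
      (forall i j k, le i j -> le j k -> le i k) /\
      (forall i j, exists k, le i k /\ le j k) /\
      (forall i (x : 'I_(m i).+1), phi i i x = x) /\
      (forall i j k (x : 'I_(m k).+1), le i j -> le j k ->
         phi i j (phi j k x) = phi i k x) /\
    (forall i j (x y : 'I_(m j).+1), le i j ->
         phi i j (x + y)%R = (phi i j x + phi i j y)%R).

(* Elements of the inverse limit: compatible families in the product
   (concrete model of the inverse limit; product topology). *)
Definition in_inv_lim (I : Type) (le : I -> I -> Prop) (m : I -> nat)
  (phi : forall i j : I, 'I_(m j).+1 -> 'I_(m i).+1)
  (x : forall i, 'I_(m i).+1) : Prop :=
  forall i j, le i j -> phi i j (x j) = x i.

Definition topgroup_iso (R : realType) (d : seqZ R) (mul : seqZ R -> seqZ R -> seqZ R)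
  (I : Type) (le : I -> I -> Prop) (m : I -> nat)
  (phi : forall i j : I, 'I_(m j).+1 -> 'I_(m i).+1)
  (Phi : seqZ R -> forall i, 'I_(m i).+1) : Prop :=
  (forall x, in_hull d x -> in_inv_lim le phi (Phi x)) /\
      (forall x y, in_hull d x -> in_hull d y -> (forall i, Phi x i = Phi y i) -> x = y) /\
      (forall z, in_inv_lim le phi z -> exists2 x, in_hull d x & forall i, Phi x i = z i) /\
      (forall x y, in_hull d x -> in_hull d y -> forall i,
         Phi (mul x y) i = (Phi x i + Phi y i)%R) /\
      (* continuity of Phi (each coordinate locally constant) *)
      (forall x, in_hull d x -> forall i, exists2 dl : R, 0 < dl &
         forall y, in_hull d y -> close dl x y -> Phi y i = Phi x i) /\
    (* continuity of Phi^{-1}: basic product-topology neighbourhoods *)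
      (forall x, in_hull d x -> forall e : R, 0 < e ->
         exists (N : nat) (f : 'I_N -> I), forall y, in_hull d y ->
           (forall j, Phi y (f j) = Phi x (f j)) -> close e x y).

(* Main.v *)
Require Import Defs.
From mathcomp Require Import all_boot all_order all_algebra.
From mathcomp Require Import reals.
From mathcomp Require Import boolp classical_sets.
From mathcomp Require Import ring lra.
Set Implicit Arguments. Unset Strict Implicit. Unset Printing Implicit Defensive.
Import Order.TTheory GRing.Theory Num.Theory.
Local Open Scope ring_scope.

Section Aux.
Variable R : realType.
Implicit Types (x y z p : seqZ R) (e : R).

Lemma shiftD (k l : int) x : shift k (shift l x) = shift (l + k) x.
Proof. by apply: funext => n; rewrite /shift -addrA (addrC k l). Qed.

Lemma shift0 x : shift 0 x = x.
Proof. by apply: funext => n; rewrite /shift addr0. Qed.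

Lemma close_shift e (k : int) x y : close e x y -> close e (shift k x) (shift k y).
Proof. by move=> h n; exact: h. Qed.

Lemma close_sym e x y : close e x y -> close e y x.
Proof. by move=> h n; rewrite distrC. Qed.

Lemma close_trans a b x y z : close a x y -> close b y z -> close (a + b) x z.
Proof.
move=> h1 h2 n; apply: le_trans (ler_distD (y n) _ _) _.
exact: lerD.
Qed.

Lemma close_le a b x y : a <= b -> close a x y -> close b x y.
Proof. by move=> ab h n; apply: le_trans (h n) ab. Qed.

Lemma close_refl e x : 0 <= e -> close e x x.
Proof. by move=> h n; rewrite subrr normr0. Qed.

Lemma close_eq x y : (forall e, 0 < e -> close e x y) -> x = y.
Proof.
move=> H; apply: funext => t.
have h0 := normr_ge0 (x t - y t).
have h : `|x t - y t| <= 0.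
  rewrite leNgt; apply/negP => hp.
  have := H _ (divr_gt0 hp (ltr0Sn _ 1)) t; lra.
have : `|x t - y t| == 0 by rewrite eq_le h h0.
by rewrite normr_eq0 subr_eq0 => /eqP.
Qed.

Lemma key_lem p (u v : nat) : (u < v)%N -> shift u%:Z p = shift v%:Z p -> shift (v - u)%N%:Z p = p.
Proof.
move=> uv e.
rewrite -subzn; last exact: ltnW.
have : shift (- u%:Z) (shift u%:Z p) = shift (- u%:Z) (shift v%:Z p) by rewrite e.
by rewrite !shiftD subrr shift0 => <-.
Qed.

Lemma pigeon N (g : 'I_N.+1 -> 'I_N) : ~ injective g.
Proof. by move=> inj; have := leq_card g inj; rewrite !card_ord ltnn. Qed.

Lemma period p : periodic p -> exists q0 : nat, (0 < q0)%N /\ shift q0%:Z p = p.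
Proof.
case=> N [f hf]; apply: contrapT => H.
have hf' (a : 'I_N.+1) : {i : 'I_N | shift (val a)%:Z p = f i}.
  by apply: cid; exact: hf.
apply: (@pigeon N (fun a => sval (hf' a))) => a b gab.
have eab : shift (val a)%:Z p = shift (val b)%:Z p.
  by rewrite (svalP (hf' a)) (svalP (hf' b)) gab.
have key (u v : nat) : (u < v)%N -> shift u%:Z p = shift v%:Z p -> False.
  move=> uv e; apply: H; exists (v - u)%N; split; first by rewrite subn_gt0.
  exact: key_lem.
case: (ltngtP (val a) (val b)) => [lt|lt|/val_inj //].
  by case: (key _ _ lt eab).
by case: (key _ _ lt (esym eab)).
Qed.

Lemma period_mul p (q0 : nat) : shift q0%:Z p = p -> forall j : int, shift (j * q0%:Z) p = p.
Proof.
move=> hq.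
have hn (n : nat) : shift (n%:Z * q0%:Z) p = p.
  elim: n => [|n IH]; first by rewrite mul0r shift0.
  by rewrite intS mulrDl mul1r addrC -shiftD IH hq.
case=> n; first exact: hn.
by rewrite NegzE mulNr -[in LHS](hn n.+1) shiftD subrr shift0.
Qed.

Lemma period_cong p (q0 : nat) : shift q0%:Z p = p ->
  forall k k' : int, (q0%:Z %| k' - k)%Z -> shift k p = shift k' p.
Proof.
move=> hq k k' /divzK hd.
have -> : k' = (k' - k) + k by rewrite subrK.
by rewrite -shiftD -hd period_mul.
Qed.

End Aux.

Section Key.
Variable R : realType.
Variable d : seqZ R.

Definition good (q : nat) := (0 < q)%N /\ exists2 dl : R, 0 < dl &
  forall k k' : int, close dl (shift k d) (shift k' d) -> (q%:Z %| k' - k)%Z.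
Definition fine (q : nat) (e : R) := forall k k' : int,
  (q%:Z %| k' - k)%Z -> close e (shift k d) (shift k' d).

Lemma close_diff e (k k' : int) : close e (shift k d) (shift k' d) -> close e d (shift (k' - k) d).
Proof. by move=> h; have := close_shift (-k) h; rewrite !shiftD subrr shift0. Qed.

Lemma close_undiff e (k k' : int) : close e d (shift (k' - k) d) -> close e (shift k d) (shift k' d).
Proof. by move=> h; have := close_shift k h; rewrite shiftD subrK. Qed.

Lemma good1 : good 1.
Proof. by split=> //; exists 1 => // k k' _; exact: dvd1z. Qed.

Lemma good_lcm a b : good a -> good b -> good (lcmn a b).
Proof.
case=> a0 [da da0 ha] [b0 [db db0 hb]]; split; first by rewrite lcmn_gt0 a0 b0.
exists (Num.min da db); first by rewrite lt_min da0 db0.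
move=> k k' h; rewrite dvdz_lcm ha ?hb //; apply: close_le h; by rewrite ge_min lexx ?orbT.
Qed.

Lemma fine_dvd a b e : fine a e -> (a %| b)%N -> fine b e.
Proof. by move=> h ab k k' hb; apply: h; apply: dvdz_trans hb; rewrite dvdzE. Qed.

Lemma key_fine : limit_periodic d -> forall e : R, 0 < e -> exists q, good q /\ fine q e.
Proof.
move=> lp e e0.
have e4 : 0 < e / 4 by lra.
case: (lp _ e4) => p [pp cp].
case: (period pp) => q0 [q00 hq0].
have AP (k k' : int) : (q0%:Z %| k' - k)%Z -> close (e/2) (shift k d) (shift k' d).
  move=> h; have eq := period_cong hq0 h.
  have c1 : close (e/4) (shift k d) (shift k p) := close_shift k cp.
  have c2 : close (e/4) (shift k' p) (shift k' d) := close_sym (close_shift k' cp).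
  rewrite eq in c1; apply: close_le (close_trans c1 c2); lra.
pose B (r : int) := forall eta : R, 0 < eta ->
  exists s : int, (q0%:Z %| s - r)%Z /\ close eta d (shift s d).
have BD r1 r2 : B r1 -> B r2 -> B (r1 + r2).
  move=> h1 h2 eta eta0.
  have eta2 : 0 < eta / 2 by lra.
  case: (h1 _ eta2) => s1 [d1 c1]; case: (h2 _ eta2) => s2 [d2 c2].
  exists (s2 + s1); split.
    have -> : s2 + s1 - (r1 + r2) = (s1 - r1) + (s2 - r2) by ring.
    by rewrite rpredD.
  have c3 : close (eta/2) (shift s1 d) (shift (s2 + s1) d).
    by rewrite -shiftD; exact: close_shift.
  apply: close_le (close_trans c1 c3); lra.
have BN r : B r -> B (-r).
  move=> h eta eta0; case: (h _ eta0) => s [ds cs]; exists (-s); split.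
    have -> : -s - -r = -(s - r) by ring.
    by rewrite rpredN.
  have := close_shift (-s) cs; rewrite shiftD subrr shift0 => /close_sym //.
have BMn r (n : nat) : B r -> B (r * n%:Z).
  move=> h; elim: n => [|n IH].
    rewrite mulr0 => eta eta0; exists 0; rewrite subr0 shift0; split; first exact: dvdz0.
    exact: close_refl (ltW eta0).
  by rewrite intS mulrDr mulr1; exact: BD.
have BM r (j : int) : B r -> B (r * j).
  move=> h; case: j => n; first exact: BMn.
  rewrite NegzE mulrN; apply: BN; exact: BMn.
have Bcong r r' : (q0%:Z %| r - r')%Z -> B r' -> B r.
  move=> hr h eta eta0; case: (h _ eta0) => s [ds cs]; exists s; split=> //.
  have -> : s - r = (s - r') - (r - r') by ring.
  by rewrite rpredB.
have exP : exists n : nat, `[< (0 < n)%N /\ B n%:Z >].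
  exists q0; apply/asboolP; split => // eta eta0; exists 0; split; last first.
    rewrite shift0; exact: close_refl (ltW eta0).
  by rewrite sub0r rpredN dvdzz.
case: (ex_minnP exP) => q /asboolP [q_pos Bq] qmin.
have Bdiv r : B r -> (q%:Z %| r)%Z.
  move=> Br.
  have q0' : q%:Z != 0 by rewrite eqz_nat -lt0n.
  have m0 := modz_ge0 r q0'.
  have mq : (r %% q%:Z)%Z < q%:Z by rewrite ltz_pmod // ltz_nat.
  have Bm : B (r %% q%:Z)%Z.
    have -> : (r %% q%:Z)%Z = r + q%:Z * - (r %/ q%:Z)%Z.
      by rewrite {2}(divz_eq r q%:Z); ring.
    exact: BD Br (BM _ _ Bq).
  apply/dvdz_mod0P.
  have [n En] : exists n : nat, (r %% q%:Z)%Z = n%:Z.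
    by exists (absz (r %% q%:Z)%Z); rewrite gez0_abs.
  rewrite En in mq Bm *; case: n {En} mq Bm => [//|n] mq Bm.
  have := qmin n.+1 (introT (asboolP _) (conj (ltn0Sn n) Bm)).
  by rewrite leqNgt -ltz_nat mq.
have Hfine : fine q e.
  move=> k k' hd; apply: close_undiff.
  have Bk : B (k' - k) by rewrite -(divzK hd) mulrC; exact: BM.
  have e2 : 0 < e / 2 by lra.
  case: (Bk _ e2) => s [ds cs].
  have c : close (e/2) (shift s d) (shift (k' - k) d) by apply: AP; rewrite -opprB rpredN.
  apply: close_le (close_trans cs c); lra.
have fm : forall n : nat, exists2 dl : R, 0 < dl & forall r : nat, (r < n)%N ->
    ~ B r%:Z -> forall s : int, (q0%:Z %| s - r%:Z)%Z -> ~ close dl d (shift s d).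
  elim=> [|n [dl dl0 IH]]; first by exists 1.
  case: (pselect (B n%:Z)) => Bn.
    exists dl => // r; rewrite ltnS leq_eqVlt => /orP [/eqP -> /(_ Bn) []|rn]; exact: IH.
  have [eta eta0 Heta] : exists2 eta : R, 0 < eta & forall s : int,
      (q0%:Z %| s - n%:Z)%Z -> ~ close eta d (shift s d).
    apply: contrapT => C; apply: Bn => eta eta0; apply: contrapT => C2; apply: C.
    by exists eta => // s hs hc; apply: C2; exists s.
  exists (Num.min dl eta); first by rewrite lt_min dl0 eta0.
  move=> r; rewrite ltnS leq_eqVlt => /orP [/eqP -> _ s hs hc|rn hB s hs hc].
    by apply: (Heta s hs); apply: close_le hc; rewrite ge_min lexx orbT.
  by apply: (IH r rn hB s hs); apply: close_le hc; rewrite ge_min lexx.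
have Hgood : good q.
  split => //; case: (fm q0) => dl dl0 Hdl; exists dl => // k k' hc.
  apply: Bdiv; have hc' := close_diff hc; move: hc'; move: (k' - k) => s hc'.
  have q0z : (0 < q0%:Z) by rewrite ltz_nat.
  have [n En] : exists n : nat, (s %% q0%:Z)%Z = n%:Z.
    by exists (absz (s %% q0%:Z)%Z); rewrite gez0_abs // modz_ge0 // gt_eqF.
  have nq : (n < q0)%N by rewrite -ltz_nat -En ltz_pmod.
  have dsn : (q0%:Z %| s - n%:Z)%Z by rewrite -En -eqz_mod_dvd modz_mod.
  have Bn : B n%:Z by apply: contrapT => nB; exact: (Hdl n nq nB s dsn hc').
  exact: Bcong dsn Bn.
by exists q; split.
Qed.

End Key.

Section Main.
Variable R : realType.
Variable d : seqZ R.

Definition gI := {n : nat | good d n.+1}.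

Definition dlt (i : gI) : R := s2val (cid2 (proj2 (svalP i))).

Lemma dlt_pos i : 0 < dlt i.
Proof. by rewrite /dlt; case: cid2. Qed.

Lemma dlt_spec i (k k' : int) : close (dlt i) (shift k d) (shift k' d) ->
  ((sval i).+1%:Z %| k' - k)%Z.
Proof. by rewrite /dlt; case: cid2 => /= dl _ h; exact: h. Qed.

Definition rz (n : nat) (k : int) : 'I_n.+1 := inZp (absz (k %% n.+1%:Z)%Z).

Lemma rz_val n k : (val (rz n k))%:Z = (k %% n.+1%:Z)%Z.
Proof.
have h0 : 0 <= (k %% n.+1%:Z)%Z by rewrite modz_ge0.
rewrite /= modn_small ?gez0_abs //.
by rewrite -ltz_nat gez0_abs // ltz_pmod.
Qed.

Lemma rz_eq n k k' : rz n k = rz n k' <-> (n.+1%:Z %| k' - k)%Z.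
Proof.
split=> [h|h].
  have := congr1 (fun x : 'I_n.+1 => (val x)%:Z) h; rewrite /= !rz_val => e.
  by rewrite -eqz_mod_dvd e.
apply: val_inj; apply/eqP; rewrite -eqz_nat !rz_val eq_sym.
by move: h; rewrite -eqz_mod_dvd.
Qed.

Lemma rzD n k l : rz n (k + l) = rz n k + rz n l.
Proof.
apply: val_inj; apply/eqP; rewrite -eqz_nat.
have -> : val (rz n k + rz n l) = ((val (rz n k) + val (rz n l)) %% n.+1)%N by [].
by rewrite -modz_nat PoszD !rz_val modzDm.
Qed.

Lemma rz_nat n (a : nat) : rz n a%:Z = inZp a.
Proof. by apply: val_inj => /=; rewrite modz_nat /= modn_mod. Qed.

Lemma rz_phi n n' k : (n.+1 %| n'.+1)%N -> (inZp (val (rz n' k)) : 'I_n.+1) = rz n k.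
Proof.
move=> dv; apply: val_inj; apply/eqP; rewrite -eqz_nat rz_val /= -modz_nat rz_val.
have h : (n.+1%:Z %| (k %% n'.+1%:Z)%Z - k)%Z.
  apply: (@dvdz_trans n'.+1%:Z); first by rewrite dvdzE.
  by rewrite -eqz_mod_dvd modz_mod.
by move: h; rewrite -eqz_mod_dvd.
Qed.

Definition Phi (x : seqZ R) (i : gI) : 'I_(sval i).+1 :=
  match pselect (exists k : int, close (dlt i / 3) x (shift k d)) with
  | left h => rz (sval i) (projT1 (cid h))
  | right _ => ord0
  end.

Lemma Phi_spec x i k : close (dlt i / 3) x (shift k d) -> Phi x i = rz (sval i) k.
Proof.
move=> hk; rewrite /Phi; case: pselect => [h|[]]; last by exists k.
case: cid => k0 /= h0; apply/rz_eq; apply: dlt_spec.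
have := dlt_pos i => hp.
apply: close_le (close_trans (close_sym h0) hk); lra.
Qed.

Lemma hull_shift k : in_hull d (shift k d).
Proof. by move=> e e0; exists k; exact: close_refl (ltW e0). Qed.

Lemma sep (lp : limit_periodic d) x e : in_hull d x -> 0 < e ->
  exists i : gI, forall y, in_hull d y -> Phi y i = Phi x i -> close e x y.
Proof.
move=> hx e0.
have e3 : 0 < e / 3 by lra.
case: (key_fine lp e3) => q [gq fq].
have q0 := gq.1.
have gq' : good d q.-1.+1 by rewrite prednK.
pose i : gI := exist _ q.-1 gq'.
exists i => y hy hP.
have d3 : 0 < dlt i / 3 by have := dlt_pos i; lra.
have m0 : 0 < Num.min (dlt i / 3) (e / 3) by rewrite lt_min d3 e3.
case: (hx _ m0) => kx cx; case: (hy _ m0) => ky cy.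
rewrite (Phi_spec (close_le _ cx)) ?ge_min ?lexx // in hP.
rewrite (Phi_spec (close_le _ cy)) ?ge_min ?lexx // in hP.
move/rz_eq: hP; rewrite /= prednK // => hd.
have c := fq _ _ hd.
have cx' : close (e / 3) x (shift kx d) by apply: close_le cx; rewrite ge_min lexx orbT.
have cy' : close (e / 3) y (shift ky d) by apply: close_le cy; rewrite ge_min lexx orbT.
apply: close_le (close_trans (close_trans cx' (close_sym c)) (close_sym cy')); lra.
Qed.

Definition eps (n : nat) : R := (n.+1%:R)^-1.

Lemma eps_pos n : 0 < eps n.
Proof. by rewrite invr_gt0 ltr0Sn. Qed.

Lemma eps_dec m n : (m <= n)%N -> eps n <= eps m.
Proof. by move=> h; rewrite /eps lef_pV2 ?posrE ?ltr0Sn // ler_nat ltnS. Qed.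

Lemma eps_small e : 0 < e -> exists n, eps n <= e.
Proof.
move=> e0; exists (Num.Def.trunc e^-1).
rewrite /eps -[e in _ <= e]invrK lef_pV2 ?posrE ?invr_gt0 ?ltr0Sn //.
exact: ltW (truncnS_gt _).
Qed.

Definition aq (lp : limit_periodic d) (n : nat) : nat := projT1 (cid (key_fine lp (eps_pos n))).

Lemma aq_good lp n : good d (aq lp n) /\ fine d (aq lp n) (eps n).
Proof. by rewrite /aq; case: cid. Qed.

Fixpoint Q lp n : nat := match n with
  | 0 => aq lp 0
  | n'.+1 => lcmn (lcmn (Q lp n') (aq lp n'.+1)) (if `[< good d n'.+1 >] then n'.+1 else 1)
  end.

Lemma Q_good lp n : good d (Q lp n).
Proof.
elim: n => [|n IH]; first exact: (aq_good lp 0).1.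
rewrite /=; apply: good_lcm; first exact: good_lcm IH (aq_good lp n.+1).1.
by case: ifP => [/asboolP //|_]; exact: good1.
Qed.

Lemma Q_fine lp n : fine d (Q lp n) (eps n).
Proof.
apply: fine_dvd (aq_good lp n).2 _; case: n => [|n] //=.
exact: dvdn_trans (dvdn_lcmr (Q lp n) _) (dvdn_lcml _ _).
Qed.

Lemma Q_step lp n : (Q lp n %| Q lp n.+1)%N.
Proof. exact: dvdn_trans (dvdn_lcml _ _) (dvdn_lcml _ _). Qed.

Lemma Q_mono lp m n : (m <= n)%N -> (Q lp m %| Q lp n)%N.
Proof.
elim: n => [|n IH]; first by rewrite leqn0 => /eqP ->.
rewrite leq_eqVlt => /orP [/eqP -> //|]; rewrite ltnS => /IH h.
exact: dvdn_trans h (Q_step lp n).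
Qed.

Lemma Q_cover lp q n : good d q -> (q <= n)%N -> (q %| Q lp n)%N.
Proof.
move=> gq; have q0 := gq.1; elim: n => [|n IH].
  by rewrite leqn0 => /eqP q00; rewrite q00 in q0.
rewrite leq_eqVlt => /orP [/eqP qe|]; last first.
  by rewrite ltnS => /IH h; exact: dvdn_trans h (Q_step lp n).
rewrite /= qe; have -> : `[< good d n.+1 >] = true by apply/asboolP; rewrite -qe.
exact: dvdn_lcmr.
Qed.

Lemma Jgood lp n : good d (Q lp n).-1.+1.
Proof. by rewrite prednK ?(Q_good lp n).1 //; exact: Q_good. Qed.

Definition J lp n : gI := exist _ (Q lp n).-1 (Jgood lp n).

Lemma J_val lp n : (sval (J lp n)).+1 = Q lp n.
Proof. by rewrite /= prednK // (Q_good lp n).1. Qed.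

Lemma surj (lp : limit_periodic d) (z : forall i : gI, 'I_(sval i).+1) :
  (forall i j : gI, ((sval i).+1 %| (sval j).+1)%N -> (inZp (val (z j)) : 'I_(sval i).+1) = z i) ->
  exists2 x, in_hull d x & forall i, Phi x i = z i.
Proof.
move=> hz.
pose kk n : int := (val (z (J lp n)))%:Z.
have cmp m n : (m <= n)%N -> ((Q lp m)%:Z %| kk n - kk m)%Z.
  move=> mn.
  have le : ((sval (J lp m)).+1 %| (sval (J lp n)).+1)%N by rewrite !J_val Q_mono.
  rewrite /kk -(hz _ _ le) /=; move: (nat_of_ord (z (J lp n))) => a.
  rewrite prednK ?(Q_good lp m).1 // -modz_nat -eqz_mod_dvd.
  by rewrite modz_mod.
have cl m n : (m <= n)%N -> close (eps m) (shift (kk m) d) (shift (kk n) d).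
  by move=> h; apply: Q_fine; exact: cmp.
have bnd t m n : shift (kk m) d t - eps m <= shift (kk n) d t + eps n.
  have := eps_pos m; have := eps_pos n.
  case: (leqP m n) => h.
    by have := cl _ _ h t; rewrite ler_norml => /andP [h1 h2]; lra.
  by have := cl _ _ (ltnW h) t; rewrite ler_norml => /andP [h1 h2]; lra.
pose x : seqZ R := fun t => sup (range (fun n => shift (kk n) d t - eps n)).
have xc n : close (eps n) x (shift (kk n) d).
  move=> t.
  have h1 : shift (kk n) d t - eps n <= x t.
    apply: ub_le_sup; last by exists n.
    by exists (shift (kk 0%N) d t + eps 0%N) => y [m _ <-]; exact: bnd.
  have h2 : x t <= shift (kk n) d t + eps n.
    apply: ge_sup; first by exists (shift (kk 0%N) d t - eps 0%N); exists 0%N.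
    by move=> y [m _ <-]; exact: bnd.
  rewrite ler_norml; apply/andP; split; lra.
exists x.
  move=> e e0; case: (eps_small e0) => n hn; exists (kk n); exact: close_le hn (xc n).
move=> i.
have gq : good d (sval i).+1 := svalP i.
have d3 : 0 < dlt i / 3 by have := dlt_pos i; lra.
case: (eps_small d3) => n1 hn1.
pose n := maxn n1 (sval i).+1.
have h1 : eps n <= dlt i / 3 by apply: le_trans (eps_dec (leq_maxl _ _)) hn1.
rewrite (Phi_spec (close_le h1 (xc n))).
have le : ((sval i).+1 %| (sval (J lp n)).+1)%N.
  by rewrite J_val; apply: Q_cover gq (leq_maxr _ _).
by rewrite -(hz _ _ le) /kk rz_nat.
Qed.

End Main.

Theorem theorem4p9 (R : realType) (d : seqZ R)
  (mul : seqZ R -> seqZ R -> seqZ R) (inv : seqZ R -> seqZ R) :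
  bounded_seq d -> limit_periodic d -> hull_topgroup d mul inv ->
  exists (I : Type) (le : I -> I -> Prop) (m : I -> nat)
         (phi : forall i j : I, 'I_(m j).+1 -> 'I_(m i).+1),
    cyclic_inverse_system le phi /\
    exists Phi : seqZ R -> forall i, 'I_(m i).+1, topgroup_iso d mul le phi Phi.
Proof.
move=> _ lp [hmul [hinv [hass [hid [hinvl [hhom [hcm hci]]]]]]].
exists (gI d), (fun i j => ((sval i).+1 %| (sval j).+1)%N), (fun i => sval i),
  (fun i j x => inZp (val x)).
split.
  split; first exact: (inhabits (exist _ 0%N (good1 d))).
  split; first by move=> i; exact: dvdnn.
  split; first by move=> i j k; exact: dvdn_trans.
  split.
    move=> i j.
    have gl : good d (lcmn (sval i).+1 (sval j).+1).-1.+1.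
      by rewrite prednK ?lcmn_gt0 //; exact: good_lcm (svalP i) (svalP j).
    exists (exist (fun n => good d n.+1) _ gl); rewrite /= prednK ?lcmn_gt0 //.
    by split; [exact: dvdn_lcml|exact: dvdn_lcmr].
  split; first by move=> i x; apply: val_inj => /=; rewrite modn_small.
  split; first by move=> i j k x hij hjk; apply: val_inj => /=; rewrite modn_dvdm.
  by move=> i j x y hij; apply: val_inj => /=; rewrite modn_dvdm // modnDm.
exists (@Phi R d).
split.
  move=> x hx i j hij.
  have d3 i' : 0 < dlt i' / 3 by have := dlt_pos i'; lra.
  have m0 : 0 < Num.min (dlt i / 3) (dlt j / 3) by rewrite lt_min !d3.
  case: (hx _ m0) => k ck.
  rewrite (Phi_spec (close_le _ ck)) ?ge_min ?lexx ?orbT //.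
  rewrite (Phi_spec (close_le _ ck)) ?ge_min ?lexx ?orbT //.
  exact: rz_phi.
split.
  move=> x y hx hy hP; apply: close_eq => e e0.
  case: (sep lp hx e0) => i h; exact: h y hy (esym (hP i)).
split; first by move=> z hz; exact: surj.
split.
  move=> x y hx hy i.
  have d3 : 0 < dlt i / 3 by have := dlt_pos i; lra.
  case: (hcm x y hx hy _ d3) => dl dl0 hdl.
  have m0 : 0 < Num.min dl (dlt i / 3) by rewrite lt_min dl0 d3.
  case: (hx _ m0) => k ck; case: (hy _ m0) => l cl.
  have mc : Num.min dl (dlt i / 3) <= dl by rewrite ge_min lexx.
  have c := hdl (shift k d) (shift l d) (hull_shift d k) (hull_shift d l)
    (close_le mc ck) (close_le mc cl).
  rewrite hhom in c.
  rewrite (Phi_spec c) (Phi_spec (close_le _ ck)) ?ge_min ?lexx ?orbT //.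
  rewrite (Phi_spec (close_le _ cl)) ?ge_min ?lexx ?orbT //.
  exact: rzD.
split.
  move=> x hx i.
  have d6 : 0 < dlt i / 6 by have := dlt_pos i; lra.
  exists (dlt i / 6) => // y hy cxy.
  case: (hx _ d6) => k ck.
  have := dlt_pos i => hp.
  rewrite (Phi_spec (close_le _ ck)); last lra.
  rewrite (Phi_spec (close_le _ (close_trans (close_sym cxy) ck))) //; lra.
move=> x hx e e0.
case: (sep lp hx e0) => i h.
by exists 1%N, (fun _ => i) => y hy hj; exact: h y hy (hj ord0).
Qed.
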